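(* (Differential equation.) Let $n,s\in\mathbb{N}_0$ and $P_n\in M_n$. Then $H=H_{s,\mu,P_n}$ satisfies $D_h^2H-2x\,D_hH-C(s,\mu,n)\,H=0,$ where $C(s,\mu,n)=2s$ if $s$ is even and $C(s,\mu,n)=2(s+\mu+2n-1)$ if $s$ is odd, and $2x\,D_hH$ denotes the Clifford product of $2x$ with $D_hH$.
   Context: Let $d\ge 2$. $\mathbb{R}_{0,d}$ is the real Clifford algebra generated by $e_1,\dots,e_d$ with $e_ie_j+e_je_i=-2\delta_{ij}$; vectors $x$ are identified with $\sum_ix_ie_i$. $R$ is a root system with reflection group $W$, positive subsystem $R_+$, $\kappa:R\to[0,\infty)$ a $W$-invariant multiplicity function with $\gamma_\kappa=\sum_{\alpha\in R_+}\kappa(\alpha)>0$, $\mu=2\gamma_\kappa+d$. Dunkl operators $T_if(x)=\partial_{x_i}f(x)+\sum_{\alpha\in R_+}\kappa(\alpha)\frac{f(x)-f(\sigma_\alpha x)}{\langle\alpha,x\rangle}\alpha_i$; Dunkl–Dirac operator $D_h=\sum_ie_iT_i$. $M_n$: $\mathbb{C}\otimes\mathbb{R}_{0,d}$-valued homogeneous polynomials of degree $n$ with $D_hP=0$. $D_+f=D_hf-2xf$, and $H_{s,\mu,P_n}=(D_+)^sP_n$. *)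

(* Defs.v *)
From Stdlib Require Import Reals Lra List Arith.
From Stdlib Require Import Classical ClassicalEpsilon.
Open Scope R_scope.

Definition Cc := (R * R)%type.
Definition c0 : Cc := (0, 0).
Definition cadd (a b : Cc) : Cc := (fst a + fst b, snd a + snd b).
Definition cmul (a b : Cc) : Cc :=
  (fst a * fst b - snd a * snd b, fst a * snd b + snd a * fst b).
Definition cscal (r : R) (a : Cc) : Cc := (r * fst a, r * snd a).

Fixpoint csum (n : nat) (f : nat -> Cc) : Cc :=
  match n with O => c0 | S m => cadd (csum m f) (f m) end.
Fixpoint rsum (n : nat) (f : nat -> R) : R :=
  match n with O => 0 | S m => rsum m f + f m end.
Fixpoint nsum (n : nat) (f : nat -> nat) : nat :=
  match n with O => O | S m => (nsum m f + f m)%nat end.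

(* ---------- the complexified Clifford algebra C (x) R_{0,d} ----------
   An element is the family of its coordinates on the basis e_A, where the
   subset A of {0,..,d-1} is encoded as the bitmask k (bit i set <-> i in A).
   Only coordinates k < 2^d are meaningful. *)
Definition CL := nat -> Cc.
Definition clzero : CL := fun _ => c0.
Definition cladd (u v : CL) : CL := fun k => cadd (u k) (v k).
Definition clscal (r : R) (u : CL) : CL := fun k => cscal r (u k).
Definition clsub (u v : CL) : CL := cladd u (clscal (-1) v).
Definition clsumn (n : nat) (F : nat -> CL) : CL := fun k => csum n (fun i => F i k).

(* sign of e_A e_B = sign * e_(A xor B), with e_i e_j + e_j e_i = -2 delta_ij *)
Definition clsign (d a b : nat) : R :=
  (-1) ^ (nsum d (fun i => nsum d (fun j =>
            if (Nat.testbit a i && Nat.testbit b j && Nat.ltb j i)%bool then 1%nat else 0%nat))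
          + nsum d (fun i => if (Nat.testbit a i && Nat.testbit b i)%bool then 1%nat else 0%nat))%nat.

Definition clmul (d : nat) (u v : CL) : CL := fun k =>
  csum (2 ^ d) (fun a => csum (2 ^ d) (fun b =>
    if Nat.eqb (Nat.lxor a b) k then cscal (clsign d a b) (cmul (u a) (v b)) else c0)).

Definition egen (i : nat) : CL := fun k => if Nat.eqb k (2 ^ i) then (1, 0) else c0.
Definition vecCL (d : nat) (x : nat -> R) : CL :=
  fun k => csum d (fun i => if Nat.eqb k (2 ^ i) then (x i, 0) else c0).

(* ---------- Euclidean geometry on R^d (points: nat -> R, coords < d used) ---------- *)
Definition ip (d : nat) (a b : nat -> R) : R := rsum d (fun i => a i * b i).
Definition vscal (c : R) (a : nat -> R) : nat -> R := fun j => c * a j.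
Definition refl (d : nat) (alpha x : nat -> R) : nat -> R :=
  fun j => x j - 2 * ip d alpha x / ip d alpha alpha * alpha j.
Definition unitv (i : nat) : nat -> R := fun j => if Nat.eqb j i then 1 else 0.

Definition supported (d : nat) (a : nat -> R) : Prop := forall j, (d <= j)%nat -> a j = 0.

Definition is_root_system (d : nat) (Rl : list (nat -> R)) : Prop :=
  NoDup Rl /\
  (forall a, In a Rl -> supported d a /\ exists i, (i < d)%nat /\ a i <> 0) /\
  (forall a b, In a Rl -> In b Rl -> In (refl d a b) Rl) /\
  (forall a c, In a Rl -> In (vscal c a) Rl -> c = 1 \/ c = -1).

Definition is_positive_subsystem (d : nat) (Rl Rp : list (nat -> R)) : Prop :=
  NoDup Rp /\
  exists beta, (forall a, In a Rl -> ip d a beta <> 0) /\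
    (forall a, In a Rp <-> (In a Rl /\ ip d a beta > 0)).

(* the reflection group W is generated by the sigma_alpha; a W-invariant
   multiplicity function kappa : R -> [0,oo) *)
Definition is_multiplicity (d : nat) (Rl : list (nat -> R)) (kappa : (nat -> R) -> R) : Prop :=
  (forall a, In a Rl -> 0 <= kappa a) /\
  (forall (ws : list (nat -> R)) a, (forall w, In w ws -> In w Rl) -> In a Rl ->
      kappa (fold_right (refl d) a ws) = kappa a).

Definition gamma (Rp : list (nat -> R)) (kappa : (nat -> R) -> R) : R :=
  fold_right (fun a acc => kappa a + acc) 0 Rp.
Definition mu (d : nat) (Rp : list (nat -> R)) (kappa : (nat -> R) -> R) : R :=
  2 * gamma Rp kappa + INR d.

Definition Fn := (nat -> R) -> CL.
(* derivative at 0 of a real function (the value when it exists) *)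
Definition deriv0 (g : R -> R) : R :=
  epsilon (inhabits 0) (fun l => derivable_pt_lim g 0 l).
Definition deriv0C (g : R -> CL) : CL :=
  fun k => (deriv0 (fun t => fst (g t k)), deriv0 (fun t => snd (g t k))).
Definition dirderiv (v : nat -> R) (f : Fn) (x : nat -> R) : CL :=
  deriv0C (fun t => f (fun j => x j + t * v j)).

(* the divided difference (f(x) - f(sigma_alpha x)) / <alpha,x>, extended by
   continuity (for C^1 f) to the hyperplane <alpha,x> = 0 by 2 d_alpha f / |alpha|^2 *)
Definition divdiff (d : nat) (alpha : nat -> R) (f : Fn) (x : nat -> R) : CL :=
  if Req_EM_T (ip d alpha x) 0
  then clscal (2 / ip d alpha alpha) (dirderiv alpha f x)
  else clscal (/ ip d alpha x) (clsub (f x) (f (refl d alpha x))).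

Definition dunklT (d : nat) (Rp : list (nat -> R)) (kappa : (nat -> R) -> R)
  (i : nat) (f : Fn) : Fn := fun x =>
  cladd (dirderiv (unitv i) f x)
    (fold_right (fun a acc => cladd (clscal (kappa a * a i) (divdiff d a f x)) acc) clzero Rp).

Definition Dh (d : nat) Rp kappa (f : Fn) : Fn := fun x =>
  clsumn d (fun i => clmul d (egen i) (dunklT d Rp kappa i f x)).

Definition Dplus (d : nat) Rp kappa (f : Fn) : Fn := fun x =>
  clsub (Dh d Rp kappa f x) (clscal 2 (clmul d (vecCL d x) (f x))).

Definition Hfun (d : nat) Rp kappa (s : nat) (P : Fn) : Fn :=
  Nat.iter s (Dplus d Rp kappa) P.

Definition is_hom_poly (d n : nat) (P : Fn) : Prop :=
  exists L : list ((nat -> nat) * CL),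
    (forall mc, In mc L ->
       nsum d (fst mc) = n /\ (forall k, (2 ^ d <= k)%nat -> snd mc k = c0)) /\
    (forall x, P x = fold_right
        (fun mc acc => cladd (clscal (fold_right Rmult 1 (map (fun i => x i ^ fst mc i) (seq 0 d))) (snd mc)) acc)
        clzero L).

Definition in_Mn (d : nat) Rp kappa (n : nat) (P : Fn) : Prop :=
  is_hom_poly d n P /\ (forall x, Dh d Rp kappa P x = clzero).

Definition Cconst (s : nat) (m : R) (n : nat) : R :=
  if Nat.even s then 2 * INR s else 2 * (INR s + m + 2 * INR n - 1).

(* Main.v *)
Require Import Defs.
From Stdlib Require Import Reals Lra Lia List Arith Bool.
From Stdlib Require Import Classical ClassicalEpsilon FunctionalExtensionality.
Open Scope R_scope.


Lemma Cc_eq (a b : Cc) : fst a = fst b -> snd a = snd b -> a = b.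
Proof. destruct a, b; simpl; intros; subst; reflexivity. Qed.

Ltac clring := let k := fresh "k" in apply functional_extensionality; intro k;
  unfold cladd, clscal, clsub, clzero, cadd, cscal, c0; apply Cc_eq; simpl; ring.

Lemma csum_ext n F G : (forall i, (i < n)%nat -> F i = G i) -> csum n F = csum n G.
Proof. induction n; simpl; intros; auto. rewrite IHn by auto. rewrite H by lia. auto. Qed.

Lemma csum_zero n F : (forall i, (i < n)%nat -> F i = c0) -> csum n F = c0.
Proof. induction n; simpl; intros; auto. rewrite IHn by auto. rewrite H by lia.
  unfold cadd, c0; simpl; apply Cc_eq; simpl; ring. Qed.

Lemma csum_single n m F : (m < n)%nat -> (forall i, (i < n)%nat -> i <> m -> F i = c0) -> csum n F = F m.
Proof. induction n; simpl; intros. lia.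
  destruct (Nat.eq_dec m n).
  - subst. rewrite csum_zero. unfold cadd, c0; apply Cc_eq; simpl; ring.
    intros; apply H0; lia.
  - rewrite IHn by (auto; lia). rewrite (H0 n) by lia. unfold cadd, c0; apply Cc_eq; simpl; ring.
Qed.

Lemma csum_add n F G : csum n (fun i => cadd (F i) (G i)) = cadd (csum n F) (csum n G).
Proof. induction n; simpl. unfold cadd, c0; apply Cc_eq; simpl; ring.
  rewrite IHn. unfold cadd; apply Cc_eq; simpl; ring. Qed.

Lemma csum_scal n r F : csum n (fun i => cscal r (F i)) = cscal r (csum n F).
Proof. induction n; simpl. unfold cscal, c0; apply Cc_eq; simpl; ring.
  rewrite IHn. unfold cadd, cscal; apply Cc_eq; simpl; ring. Qed.

Lemma clsumn_S n F : clsumn (S n) F = cladd (clsumn n F) (F n).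
Proof. reflexivity. Qed.
Lemma clsumn_0 F : clsumn 0 F = clzero.
Proof. reflexivity. Qed.
Lemma clsumn_ext n F G : (forall i, (i < n)%nat -> F i = G i) -> clsumn n F = clsumn n G.
Proof. intros; apply functional_extensionality; intro k; unfold clsumn; apply csum_ext.
  intros; rewrite H; auto. Qed.
Lemma clsumn_add n F G : clsumn n (fun i => cladd (F i) (G i)) = cladd (clsumn n F) (clsumn n G).
Proof. apply functional_extensionality; intro k; unfold clsumn, cladd. apply csum_add. Qed.
Lemma clsumn_scal n r F : clsumn n (fun i => clscal r (F i)) = clscal r (clsumn n F).
Proof. apply functional_extensionality; intro k; unfold clsumn, clscal. apply csum_scal. Qed.
Lemma clsumn_zero n : clsumn n (fun _ => clzero) = clzero.
Proof. induction n. reflexivity. rewrite clsumn_S, IHn. clring. Qed.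
Lemma clsumn_const n u : clsumn n (fun _ => u) = clscal (INR n) u.
Proof. induction n. simpl. clring. rewrite clsumn_S, IHn, S_INR. clring. Qed.
Lemma clsumn_shift n F : clsumn (S n) F = cladd (F 0%nat) (clsumn n (fun i => F (S i))).
Proof. induction n. simpl. clring. rewrite clsumn_S, IHn, (clsumn_S n (fun i => F (S i))). clring. Qed.
Lemma clsumn_swap n m F : clsumn n (fun i => clsumn m (fun j => F i j)) = clsumn m (fun j => clsumn n (fun i => F i j)).
Proof. induction n. rewrite clsumn_0. symmetry. apply clsumn_zero.
  rewrite clsumn_S, IHn. rewrite <- clsumn_add. apply clsumn_ext. intros. reflexivity. Qed.
Lemma clsumn_delta n i F : (i < n)%nat -> clsumn n (fun j => clscal (unitv i j) (F j)) = F i.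
Proof. induction n; intros. lia. rewrite clsumn_S. unfold unitv at 2.
  destruct (Nat.eq_dec i n).
  - subst. rewrite Nat.eqb_refl. rewrite clsumn_ext with (G := fun _ => clzero).
    rewrite clsumn_zero. clring. intros. unfold unitv. destruct (Nat.eqb_spec i n); try lia. clring.
  - rewrite IHn by lia. destruct (Nat.eqb_spec n i); try lia. clring.
Qed.

Definition fs {A} (l : list A) (F : A -> CL) : CL := fold_right (fun a acc => cladd (F a) acc) clzero l.
Lemma fs_add {A} (l : list A) F G : fs l (fun a => cladd (F a) (G a)) = cladd (fs l F) (fs l G).
Proof. induction l; simpl. clring. unfold fs in *; simpl; rewrite IHl. clring. Qed.
Lemma fs_scal {A} (l : list A) r F : fs l (fun a => clscal r (F a)) = clscal r (fs l F).
Proof. induction l; simpl. clring. unfold fs in *; simpl; rewrite IHl. clring. Qed.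
Lemma fs_ext {A} (l : list A) F G : (forall a, In a l -> F a = G a) -> fs l F = fs l G.
Proof. induction l; simpl; intros; auto. unfold fs in *; simpl. rewrite IHl, H; auto. Qed.
Lemma fs_zero {A} (l : list A) : fs l (fun _ => clzero) = clzero.
Proof. induction l; simpl. auto. unfold fs in *; simpl; rewrite IHl. clring. Qed.
Lemma clsumn_fs {A} n (l : list A) F : clsumn n (fun i => fs l (F i)) = fs l (fun a => clsumn n (fun i => F i a)).
Proof. induction l; simpl. apply clsumn_zero. unfold fs in *; simpl. rewrite clsumn_add, IHl. auto. Qed.
Lemma fs_scalf {A} (l : list A) (g : A -> R) u : fs l (fun a => clscal (g a) u) = clscal (fold_right (fun a acc => g a + acc) 0 l) u.
Proof. induction l; simpl. clring. unfold fs in *; simpl; rewrite IHl. clring. Qed.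


Lemma lxor_cancel a b : Nat.lxor (Nat.lxor a b) b = a.
Proof. rewrite Nat.lxor_assoc, Nat.lxor_nilpotent, Nat.lxor_0_r. auto. Qed.

Lemma lxor_cancel2 a b : Nat.lxor b (Nat.lxor a b) = a.
Proof. rewrite Nat.lxor_comm. apply lxor_cancel. Qed.

Lemma lt_pow2_xor d a b : (a < 2^d)%nat -> (b < 2^d)%nat -> (Nat.lxor a b < 2^d)%nat.
Proof. intros Ha Hb.
  destruct (Nat.eq_dec (Nat.lxor a b) 0) as [E|E]. rewrite E. apply Nat.neq_0_lt_0, Nat.pow_nonzero. lia.
  apply Nat.log2_lt_pow2. lia.
  assert (Nat.log2 a < d \/ a = 0)%nat as [A|A].
  { destruct (Nat.eq_dec a 0). auto. left. apply Nat.log2_lt_pow2; lia. }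
  all: assert (Nat.log2 b < d \/ b = 0)%nat as [B|B] by
  (destruct (Nat.eq_dec b 0); [auto| left; apply Nat.log2_lt_pow2; lia]).
  - pose proof (Nat.log2_lxor a b). lia.
  - subst. rewrite Nat.lxor_0_r. auto.
  - subst. rewrite Nat.lxor_0_l. auto.
  - subst. rewrite Nat.lxor_0_r in E. lia.
Qed.

Lemma pow2_lt d i : (i < d)%nat -> (2^i < 2^d)%nat.
Proof. intros. apply Nat.pow_lt_mono_r; lia. Qed.

Lemma nsum_ext n F G : (forall i, (i < n)%nat -> F i = G i) -> nsum n F = nsum n G.
Proof. induction n; simpl; intros; auto. rewrite IHn by auto. rewrite H by lia. auto. Qed.
Lemma nsum_single n m F : (m < n)%nat -> (forall i, (i < n)%nat -> i <> m -> F i = 0%nat) -> nsum n F = F m.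
Proof. induction n; simpl; intros. lia.
  destruct (Nat.eq_dec m n).
  - subst. assert (nsum n F = 0%nat). { clear IHn H. induction n; simpl; auto. rewrite IHn. rewrite H0; lia.
     intros; apply H0; lia. } lia.
  - rewrite IHn by (auto; lia). rewrite (H0 n) by lia. lia.
Qed.
Lemma nsum_change n l F G : (l < n)%nat -> (forall i, (i < n)%nat -> i <> l -> F i = G i) ->
  (nsum n F + G l = nsum n G + F l)%nat.
Proof. induction n; simpl; intros. lia.
  destruct (Nat.eq_dec l n).
  - subst. assert (nsum n F = nsum n G) by (apply nsum_ext; intros; apply H0; lia). lia.
  - pose proof (IHn ltac:(lia) ltac:(intros; apply H0; lia)). rewrite (H0 n) by lia. lia.
Qed.

Definition cnt (d i b : nat) : nat := nsum d (fun j => if (Nat.testbit b j && (j <? i))%bool then 1%nat else 0%nat).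
Definition bitn (b i : nat) : nat := if Nat.testbit b i then 1%nat else 0%nat.

Lemma clsign_gen d i b : (i < d)%nat -> clsign d (2^i) b = (-1)^(cnt d i b + bitn b i).
Proof. intros Hi. unfold clsign. f_equal. f_equal.
  - rewrite (nsum_single d i). rewrite Nat.pow2_bits_eqb, Nat.eqb_refl. simpl. reflexivity. auto.
    intros i0 Hi0 Hne. rewrite (nsum_ext _ _ (fun _ => 0%nat)).
    { clear; induction d; simpl; lia. }
    intros. rewrite Nat.pow2_bits_eqb. destruct (Nat.eqb_spec i i0); try lia. reflexivity.
  - rewrite (nsum_single d i). rewrite Nat.pow2_bits_eqb, Nat.eqb_refl. simpl. reflexivity. auto.
    intros. rewrite Nat.pow2_bits_eqb. destruct (Nat.eqb_spec i i0); try lia. reflexivity.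
Qed.

Definition Ei (d i : nat) (u : CL) : CL := fun k =>
  if (k <? 2^d)%nat then cscal (clsign d (2^i) (Nat.lxor k (2^i))) (u (Nat.lxor k (2^i))) else c0.

Lemma clmul_egen d i u : (i < d)%nat -> clmul d (egen i) u = Ei d i u.
Proof. intros Hi. apply functional_extensionality; intro k. unfold clmul.
  pose proof (pow2_lt d i Hi) as Hp.
  rewrite (csum_single (2^d) (2^i)); auto.
  2:{ intros a Ha Hne. apply csum_zero. intros b Hb. unfold egen. destruct (Nat.eqb_spec a (2^i)); try lia.
      destruct (_ =? k)%nat; auto. unfold cscal, cmul, c0; apply Cc_eq; simpl; ring. }
  unfold egen at 1. rewrite Nat.eqb_refl. unfold Ei.
  destruct (Nat.ltb_spec k (2^d)).
  - rewrite (csum_single (2^d) (Nat.lxor k (2^i))).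
    + rewrite (lxor_cancel2 k (2^i)%nat), Nat.eqb_refl. unfold cscal, cmul; apply Cc_eq; simpl; ring.
    + apply lt_pow2_xor; auto.
    + intros b Hb Hne. destruct (Nat.eqb_spec (Nat.lxor (2^i) b) k); auto.
      exfalso. apply Hne. subst. rewrite (Nat.lxor_comm (2^i)%nat b), lxor_cancel. auto.
  - apply csum_zero. intros b Hb. destruct (Nat.eqb_spec (Nat.lxor (2^i) b) k); auto.
    pose proof (lt_pow2_xor d (2^i) b Hp Hb). lia.
Qed.


Lemma m1sq n : (-1)^n * (-1)^n = 1.
Proof. rewrite <- pow_add. replace (n+n)%nat with (2*n)%nat by lia. rewrite pow_1_even. auto. Qed.

Lemma lxor_swap k a b : Nat.lxor (Nat.lxor k a) b = Nat.lxor (Nat.lxor k b) a.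
Proof. rewrite !Nat.lxor_assoc, (Nat.lxor_comm a b). auto. Qed.

Lemma sgn_helper a b x : a*a = 1 -> b*b = 1 -> a * -b * (a*b*x) = -1*x.
Proof. intros A B. replace (a * -b * (a*b*x)) with (-((a*a)*(b*b))*x) by ring. rewrite A, B; ring. Qed.

Lemma testbit_xor_pow b l j : Nat.testbit (Nat.lxor b (2^l)) j = xorb (Nat.testbit b j) (l =? j)%nat.
Proof. rewrite Nat.lxor_spec, Nat.pow2_bits_eqb. auto. Qed.

Lemma cnt_ge d i l b : (i <= l)%nat -> cnt d i (Nat.lxor b (2^l)) = cnt d i b.
Proof. intros. unfold cnt. apply nsum_ext. intros j Hj. rewrite testbit_xor_pow.
  destruct (Nat.ltb_spec j i). destruct (Nat.eqb_spec l j); try lia. rewrite xorb_false_r; auto.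
  rewrite !andb_false_r. auto. Qed.

Lemma cnt_lt d i l b : (l < i)%nat -> (l < d)%nat -> (-1)^(cnt d i (Nat.lxor b (2^l))) = - (-1)^(cnt d i b).
Proof. intros. unfold cnt.
  pose proof (nsum_change d l (fun j => if (Nat.testbit (Nat.lxor b (2^l)) j && (j <? i))%bool then 1%nat else 0%nat)
     (fun j => if (Nat.testbit b j && (j <? i))%bool then 1%nat else 0%nat) H0) as E.
  assert (forall j, (j < d)%nat -> j <> l -> (if (Nat.testbit (Nat.lxor b (2^l)) j && (j <? i))%bool then 1%nat else 0%nat)
      = (if (Nat.testbit b j && (j <? i))%bool then 1%nat else 0%nat)) as HH.
  { intros. rewrite testbit_xor_pow. destruct (Nat.eqb_spec l j); try lia. rewrite xorb_false_r; auto. }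
  specialize (E HH). cbv beta in E. rewrite testbit_xor_pow, Nat.eqb_refl in E.
  assert (l <? i = true)%nat as Hl by (apply Nat.ltb_lt; auto). rewrite Hl in E.
  destruct (Nat.testbit b l); simpl in E;
    apply (f_equal (fun m => (-1)^m)) in E; rewrite !pow_add in E; simpl in E;
    lra.
Qed.

Lemma bit_ne b l i : l <> i -> bitn (Nat.lxor b (2^l)) i = bitn b i.
Proof. intros. unfold bitn. rewrite testbit_xor_pow. destruct (Nat.eqb_spec l i); try lia. rewrite xorb_false_r; auto. Qed.
Lemma bit_eq b i : (-1)^(bitn (Nat.lxor b (2^i)) i) = - (-1)^(bitn b i).
Proof. unfold bitn. rewrite testbit_xor_pow, Nat.eqb_refl. destruct (Nat.testbit b i); simpl; ring. Qed.

Lemma sg_split d i b : (i < d)%nat -> clsign d (2^i) b = (-1)^(cnt d i b) * (-1)^(bitn b i).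
Proof. intros; rewrite clsign_gen, pow_add; auto. Qed.

Definition bnd (d : nat) (u : CL) : Prop := forall k, (2^d <= k)%nat -> u k = c0.

Lemma Ei_bnd d i u : bnd d (Ei d i u).
Proof. intros k Hk. unfold Ei. destruct (Nat.ltb_spec k (2^d)); auto; lia. Qed.

Lemma Ei_Ei d i u : (i < d)%nat -> bnd d u -> Ei d i (Ei d i u) = clscal (-1) u.
Proof. intros Hi Hu. apply functional_extensionality; intro k. unfold Ei.
  destruct (Nat.ltb_spec k (2^d)).
  - assert (Nat.lxor k (2^i) < 2^d)%nat by (apply lt_pow2_xor; auto; apply pow2_lt; auto).
    destruct (Nat.ltb_spec (Nat.lxor k (2^i)) (2^d)); try lia.
    rewrite lxor_cancel. rewrite !sg_split by auto. rewrite cnt_ge by lia. rewrite bit_eq.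
    unfold cscal, clscal; apply Cc_eq; simpl.
    all: apply sgn_helper; apply m1sq.
  - unfold clscal. rewrite Hu by lia. unfold cscal, c0; apply Cc_eq; simpl; ring.
Qed.

Lemma Ei_anti_lt d i j u : (i < j)%nat -> (j < d)%nat -> Ei d i (Ei d j u) = clscal (-1) (Ei d j (Ei d i u)).
Proof. intros Hij Hj. apply functional_extensionality; intro k. unfold Ei, clscal; cbv beta.
  destruct (Nat.ltb_spec k (2^d)).
  - assert (Nat.lxor k (2^i) < 2^d)%nat by (apply lt_pow2_xor; auto; apply pow2_lt; lia).
    assert (Nat.lxor k (2^j) < 2^d)%nat by (apply lt_pow2_xor; auto; apply pow2_lt; lia).
    destruct (Nat.ltb_spec (Nat.lxor k (2^i)) (2^d)); try lia.
    destruct (Nat.ltb_spec (Nat.lxor k (2^j)) (2^d)); try lia.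
    rewrite (lxor_swap k (2^j) (2^i)).
    rewrite !sg_split by lia.
    rewrite (cnt_ge d i j (Nat.lxor k (2^i))) by lia.
    rewrite (cnt_ge d j j (Nat.lxor k (2^i))) by lia.
    rewrite (cnt_ge d i i k) by lia. rewrite (cnt_ge d j j k) by lia.
    rewrite (cnt_lt d j i k) by lia.
    rewrite (bit_ne (Nat.lxor k (2^i)) j i) by lia.
    rewrite !bit_eq. rewrite (bit_ne k i j) by lia.
    unfold cscal, clscal; apply Cc_eq; simpl; ring.
  - unfold clscal, cscal, c0; apply Cc_eq; simpl; ring.
Qed.

Lemma Ei_anti d i j u : i <> j -> (i < d)%nat -> (j < d)%nat -> Ei d i (Ei d j u) = clscal (-1) (Ei d j (Ei d i u)).
Proof. intros. destruct (Nat.lt_total i j) as [H2|[H2|H2]].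
  - apply Ei_anti_lt; auto.
  - lia.
  - rewrite (Ei_anti_lt d j i u) by auto. clring.
Qed.


Lemma Ei_add d i u v : Ei d i (cladd u v) = cladd (Ei d i u) (Ei d i v).
Proof. apply functional_extensionality; intro k. unfold Ei, cladd. destruct (_ <? _)%nat;
  unfold cscal, cadd, c0; apply Cc_eq; simpl; ring. Qed.
Lemma Ei_scal d i r u : Ei d i (clscal r u) = clscal r (Ei d i u).
Proof. apply functional_extensionality; intro k. unfold Ei, clscal. destruct (_ <? _)%nat;
  unfold cscal, c0; apply Cc_eq; simpl; ring. Qed.
Lemma Ei_zero d i : Ei d i clzero = clzero.
Proof. apply functional_extensionality; intro k. unfold Ei, clzero. destruct (_ <? _)%nat;
  unfold cscal, c0; apply Cc_eq; simpl; ring. Qed.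
Lemma Ei_sumn d i n F : Ei d i (clsumn n F) = clsumn n (fun j => Ei d i (F j)).
Proof. induction n. apply Ei_zero. rewrite !clsumn_S, Ei_add, IHn. auto. Qed.
Lemma Ei_fs {A} d i (l : list A) F : Ei d i (fs l F) = fs l (fun a => Ei d i (F a)).
Proof. induction l; simpl. apply Ei_zero. unfold fs in *; simpl. rewrite Ei_add, IHl. auto. Qed.

Definition X (d : nat) (y : nat -> R) (u : CL) : CL := clsumn d (fun j => clscal (y j) (Ei d j u)).

Lemma X_add d y u v : X d y (cladd u v) = cladd (X d y u) (X d y v).
Proof. unfold X. rewrite <- clsumn_add. apply clsumn_ext; intros. rewrite Ei_add. clring. Qed.
Lemma X_scal d y r u : X d y (clscal r u) = clscal r (X d y u).
Proof. unfold X. rewrite <- clsumn_scal. apply clsumn_ext; intros. rewrite Ei_scal. clring. Qed.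
Lemma X_zero d y : X d y clzero = clzero.
Proof. unfold X. rewrite (clsumn_ext _ _ (fun _ => clzero)). apply clsumn_zero. intros. rewrite Ei_zero. clring. Qed.
Lemma X_sumn d y n F : X d y (clsumn n F) = clsumn n (fun j => X d y (F j)).
Proof. induction n. apply X_zero. rewrite !clsumn_S, X_add, IHn. auto. Qed.
Lemma X_fs {A} d y (l : list A) F : X d y (fs l F) = fs l (fun a => X d y (F a)).
Proof. induction l; simpl. apply X_zero. unfold fs in *; simpl. rewrite X_add, IHl. auto. Qed.
Lemma X_lin d a b y z u : X d (fun j => a * y j + b * z j) u = cladd (clscal a (X d y u)) (clscal b (X d z u)).
Proof. unfold X. rewrite <- !clsumn_scal, <- clsumn_add. apply clsumn_ext; intros. clring. Qed.
Lemma X_bnd d y u : bnd d (X d y u).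
Proof. unfold X. intros k Hk. unfold clsumn. apply csum_zero. intros. unfold clscal. rewrite Ei_bnd by auto.
  unfold cscal, c0; apply Cc_eq; simpl; ring. Qed.
Lemma X_unitv d i u : (i < d)%nat -> X d (unitv i) u = Ei d i u.
Proof. intros. unfold X. apply clsumn_delta. auto. Qed.

Lemma clsumn_scal_sum n g u : clsumn n (fun i => clscal (g i) u) = clscal (rsum n g) u.
Proof. induction n; simpl. clring. rewrite clsumn_S, IHn. clring. Qed.

Lemma Ei_ij d i j w : (i < d)%nat -> (j < d)%nat -> bnd d w ->
  Ei d i (Ei d j w) = cladd (clscal (-1) (Ei d j (Ei d i w))) (clscal (-2 * unitv i j) w).
Proof. intros. unfold unitv. destruct (Nat.eqb_spec j i).
  - subst. rewrite Ei_Ei by auto. clring.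
  - rewrite Ei_anti by auto. clring. Qed.

Lemma AC d y (w : nat -> CL) : (forall i, bnd d (w i)) ->
  clsumn d (fun i => Ei d i (X d y (w i))) =
  cladd (clscal (-1) (X d y (clsumn d (fun i => Ei d i (w i))))) (clscal (-2) (clsumn d (fun i => clscal (y i) (w i)))).
Proof. intros Hw.
  transitivity (clsumn d (fun i => cladd (clscal (-1) (clsumn d (fun j => clscal (y j) (Ei d j (Ei d i (w i))))))
     (clscal (-2) (clsumn d (fun j => clscal (unitv i j) (clscal (y j) (w i))))))).
  { apply clsumn_ext; intros i Hi. unfold X. rewrite Ei_sumn. rewrite <- !clsumn_scal, <- clsumn_add.
    apply clsumn_ext; intros j Hj. rewrite Ei_scal, Ei_ij by auto. clring. }
  rewrite clsumn_add, !clsumn_scal. f_equal; f_equal.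
  - unfold X. rewrite clsumn_swap. apply clsumn_ext; intros j Hj.
    rewrite Ei_sumn, clsumn_scal. auto.
  - apply clsumn_ext; intros i Hi. rewrite (clsumn_delta d i (fun j => clscal (y j) (w i))) by auto. auto.
Qed.

Lemma X_X d a u : bnd d u -> X d a (X d a u) = clscal (- ip d a a) u.
Proof. intros Hu.
  pose proof (AC d a (fun i => clscal (a i) u) ltac:(intros i k Hk; unfold clscal; rewrite Hu by auto;
     unfold cscal, c0; apply Cc_eq; simpl; ring)) as E.
  assert (E1 : clsumn d (fun i => Ei d i (X d a (clscal (a i) u))) = X d a (X d a u)).
  { unfold X at 2. apply clsumn_ext; intros. rewrite X_scal, Ei_scal. auto. }
  assert (E2 : clsumn d (fun i => Ei d i (clscal (a i) u)) = X d a u).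
  { unfold X. apply clsumn_ext; intros. rewrite Ei_scal. auto. }
  assert (E3 : clsumn d (fun i => clscal (a i) (clscal (a i) u)) = clscal (ip d a a) u).
  { unfold ip. rewrite <- clsumn_scal_sum. apply clsumn_ext; intros. clring. }
  cbv beta in E. rewrite E1, E2, E3 in E. apply functional_extensionality; intro k.
  apply (f_equal (fun f => f k)) in E. unfold cladd, clscal, cadd, cscal in *. apply Cc_eq;
  apply (f_equal (fun c => (fst c, snd c))) in E; simpl in *; injection E; intros; lra.
Qed.

Lemma clmul_add1 d a b u : clmul d (cladd a b) u = cladd (clmul d a u) (clmul d b u).
Proof. apply functional_extensionality; intro k. unfold clmul, cladd. rewrite <- csum_add. apply csum_ext; intros.
  rewrite <- csum_add. apply csum_ext; intros. destruct (_ =? _)%nat; unfold cscal, cmul, cadd, c0; apply Cc_eq; simpl; ring. Qed.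
Lemma clmul_scal1 d r a u : clmul d (clscal r a) u = clscal r (clmul d a u).
Proof. apply functional_extensionality; intro k. unfold clmul, clscal. rewrite <- csum_scal. apply csum_ext; intros.
  rewrite <- csum_scal. apply csum_ext; intros. destruct (_ =? _)%nat; unfold cscal, cmul, c0; apply Cc_eq; simpl; ring. Qed.
Lemma clmul_zero1 d u : clmul d clzero u = clzero.
Proof. apply functional_extensionality; intro k. unfold clmul, clzero. apply csum_zero. intros. apply csum_zero; intros.
  destruct (_ =? _)%nat; unfold cscal, cmul, c0; apply Cc_eq; simpl; ring. Qed.
Lemma clmul_sumn1 d n F u : clmul d (clsumn n F) u = clsumn n (fun j => clmul d (F j) u).
Proof. induction n. apply clmul_zero1. rewrite !clsumn_S, clmul_add1, IHn. auto. Qed.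

Lemma vecCL_sum d y : vecCL d y = clsumn d (fun j => clscal (y j) (egen j)).
Proof. apply functional_extensionality; intro k. unfold vecCL, clsumn. apply csum_ext. intros.
  unfold clscal, egen. destruct (_ =? _)%nat; unfold cscal, c0; apply Cc_eq; simpl; ring. Qed.

Lemma clmul_vec d y u : clmul d (vecCL d y) u = X d y u.
Proof. rewrite vecCL_sum, clmul_sumn1. unfold X. apply clsumn_ext; intros.
  rewrite clmul_scal1, clmul_egen; auto. Qed.


Definition line (y v : nat -> R) (t : R) : nat -> R := fun j => y j + t * v j.
Lemma line0 y v : line y v 0 = y.
Proof. apply functional_extensionality; intro j; unfold line; ring. Qed.

Lemma dpl_ext f g l : (forall t, f t = g t) -> derivable_pt_lim g 0 l -> derivable_pt_lim f 0 l.
Proof. intros. replace f with g; auto. apply functional_extensionality; intros; auto. Qed.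
Lemma dpl_eqv f a b : derivable_pt_lim f 0 a -> a = b -> derivable_pt_lim f 0 b.
Proof. intros; subst; auto. Qed.
Lemma dpl_plus f g a b l : derivable_pt_lim f 0 a -> derivable_pt_lim g 0 b -> l = a + b ->
  derivable_pt_lim (fun t => f t + g t) 0 l.
Proof. intros. subst. apply (derivable_pt_lim_plus f g); auto. Qed.
Lemma dpl_mult f g a b l : derivable_pt_lim f 0 a -> derivable_pt_lim g 0 b -> l = a * g 0 + f 0 * b ->
  derivable_pt_lim (fun t => f t * g t) 0 l.
Proof. intros. subst. apply (derivable_pt_lim_mult f g); auto. Qed.
Lemma dpl_const c : derivable_pt_lim (fun _ => c) 0 0.
Proof. apply derivable_pt_lim_const. Qed.
Lemma dpl_scal r f a l : derivable_pt_lim f 0 a -> l = r * a -> derivable_pt_lim (fun t => r * f t) 0 l.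
Proof. intros. subst. apply (dpl_mult (fun _ => r) f 0 a); auto. apply dpl_const. ring. Qed.
Lemma dpl_lin y v : derivable_pt_lim (fun t => y + t * v) 0 v.
Proof. apply (dpl_plus (fun _ => y) (fun t => t * v) 0 v). apply dpl_const.
  apply (dpl_mult (fun t => t) (fun _ => v) 1 0). apply derivable_pt_lim_id. apply dpl_const. ring. ring. Qed.

Lemma deriv0_eq g l : derivable_pt_lim g 0 l -> deriv0 g = l.
Proof. intros. unfold deriv0. apply (uniqueness_limite g 0).
  apply (epsilon_spec (inhabits 0) (fun l => derivable_pt_lim g 0 l)). exists l; auto. auto. Qed.

Definition HasD (f : Fn) (y v : nat -> R) (a : CL) : Prop := forall k,
  derivable_pt_lim (fun t => fst (f (line y v t) k)) 0 (fst (a k)) /\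
  derivable_pt_lim (fun t => snd (f (line y v t) k)) 0 (snd (a k)).

Lemma HasD_dirderiv f y v a : HasD f y v a -> dirderiv v f y = a.
Proof. intros H. apply functional_extensionality; intro k. unfold dirderiv, deriv0C.
  destruct (H k). apply Cc_eq; simpl; apply deriv0_eq; auto. Qed.

Lemma HasD_ext f g y v a : (forall z, f z = g z) -> HasD g y v a -> HasD f y v a.
Proof. intros E H. replace f with g; auto. apply functional_extensionality; intros; auto. Qed.
Lemma HasD_eqv f y v a b : HasD f y v a -> a = b -> HasD f y v b.
Proof. intros; subst; auto. Qed.

Lemma HD_add f g y v a b : HasD f y v a -> HasD g y v b -> HasD (fun z => cladd (f z) (g z)) y v (cladd a b).
Proof. intros Hf Hg k. destruct (Hf k), (Hg k). unfold cladd, cadd; simpl. split;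
  (eapply dpl_plus; [eauto|eauto|reflexivity]). Qed.
Lemma HD_scal f y v a r : HasD f y v a -> HasD (fun z => clscal r (f z)) y v (clscal r a).
Proof. intros Hf k. destruct (Hf k). unfold clscal, cscal; simpl. split;
  (eapply dpl_scal; [eauto|reflexivity]). Qed.
Lemma HD_const c y v : HasD (fun _ => c) y v clzero.
Proof. intros k. unfold clzero, c0; simpl. split; apply dpl_const. Qed.
Lemma HD_Ei d i f y v a : HasD f y v a -> HasD (fun z => Ei d i (f z)) y v (Ei d i a).
Proof. intros Hf k. unfold Ei. destruct (k <? 2^d)%nat.
  - destruct (Hf (Nat.lxor k (2^i))). unfold cscal; simpl. split;
    (eapply dpl_scal; [eauto|reflexivity]).
  - unfold c0; simpl. split; apply dpl_const.
Qed.
Lemma HD_coord j f y v a : HasD f y v a ->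
  HasD (fun z => clscal (z j) (f z)) y v (cladd (clscal (v j) (f y)) (clscal (y j) a)).
Proof. intros Hf k. destruct (Hf k). unfold clscal, cladd, cscal, cadd; simpl. split.
  - apply (dpl_mult (fun t => line y v t j) (fun t => fst (f (line y v t) k)) (v j) (fst (a k))); auto.
    apply dpl_lin. rewrite line0. unfold line. ring.
  - apply (dpl_mult (fun t => line y v t j) (fun t => snd (f (line y v t) k)) (v j) (snd (a k))); auto.
    apply dpl_lin. rewrite line0. unfold line. ring.
Qed.
Lemma HD_sumn n (F : nat -> Fn) y v (A : nat -> CL) : (forall m, (m < n)%nat -> HasD (F m) y v (A m)) ->
  HasD (fun z => clsumn n (fun m => F m z)) y v (clsumn n A).
Proof. induction n; intros H.
  - apply (HasD_ext _ (fun _ => clzero)). intros; reflexivity. apply HD_const.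
  - apply (HasD_ext _ (fun z => cladd (clsumn n (fun m => F m z)) (F n z))). intros; reflexivity.
    rewrite clsumn_S. apply HD_add. apply IHn; intros; apply H; lia. apply H; lia.
Qed.
Lemma HD_X d f y v a : HasD f y v a -> HasD (fun z => X d z (f z)) y v (cladd (X d v (f y)) (X d y a)).
Proof. intros Hf. unfold X.
  apply (HasD_ext _ (fun z => clsumn d (fun m => clscal (z m) (Ei d m (f z))))). intros; reflexivity.
  eapply HasD_eqv. apply HD_sumn. intros m Hm. apply (HD_coord m (fun z => Ei d m (f z))). apply HD_Ei. eauto.
  rewrite clsumn_add. auto.
Qed.


Lemma rsum_ext n f g : (forall i, (i < n)%nat -> f i = g i) -> rsum n f = rsum n g.
Proof. induction n; simpl; intros; auto. rewrite IHn, H; auto. Qed.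
Lemma rsum_lin n c1 c2 f g : rsum n (fun i => c1 * f i + c2 * g i) = c1 * rsum n f + c2 * rsum n g.
Proof. induction n; simpl. ring. rewrite IHn. ring. Qed.
Lemma rsum_zero n : rsum n (fun _ => 0) = 0.
Proof. induction n; simpl; auto. rewrite IHn; ring. Qed.
Lemma rsum_delta n j v : (j < n)%nat -> rsum n (fun i => v i * unitv j i) = v j.
Proof. induction n; intros. lia. simpl. unfold unitv at 2. destruct (Nat.eqb_spec n j).
  - subst. rewrite (rsum_ext _ _ (fun _ => 0)). rewrite rsum_zero. ring.
    intros. unfold unitv. destruct (Nat.eqb_spec i j); try lia. ring.
  - rewrite IHn by lia. ring. Qed.

Definition SC (d : nat) (g : (nat -> R) -> R) : Prop := exists G : (nat -> R) -> nat -> R,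
  forall y v, derivable_pt_lim (fun t => g (line y v t)) 0 (rsum d (fun i => v i * G y i)).

Lemma SC_ext d f g : (forall z, f z = g z) -> SC d g -> SC d f.
Proof. intros E H. replace f with g; auto. apply functional_extensionality; intros; auto. Qed.
Lemma SC_const d c : SC d (fun _ => c).
Proof. exists (fun _ _ => 0). intros. eapply dpl_eqv. apply dpl_const.
  rewrite (rsum_ext _ _ (fun _ => 0)). rewrite rsum_zero; auto. intros; ring. Qed.
Lemma SC_coord d j : (j < d)%nat -> SC d (fun z => z j).
Proof. intros. exists (fun _ i => unitv j i). intros. eapply dpl_eqv. apply (dpl_lin (y j) (v j)).
  rewrite rsum_delta; auto. Qed.
Lemma SC_mult d f g : SC d f -> SC d g -> SC d (fun z => f z * g z).
Proof. intros [F HF] [G HG]. exists (fun y i => F y i * g y + f y * G y i). intros y v.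
  eapply dpl_mult. apply HF. apply HG. cbv beta. rewrite line0.
  rewrite (rsum_ext _ _ (fun i => g y * (v i * F y i) + f y * (v i * G y i))) by (intros; ring).
  rewrite rsum_lin. ring. Qed.
Lemma SC_pow d i a : (i < d)%nat -> SC d (fun z => z i ^ a).
Proof. intros. induction a. apply (SC_ext _ _ (fun _ => 1)). intros; reflexivity. apply SC_const. apply (SC_ext _ _ (fun z => z i * z i ^ a)). intros; reflexivity.
  apply SC_mult; auto. apply SC_coord; auto. Qed.
Lemma SC_prod d (a : nat -> nat) l : (forall i, In i l -> (i < d)%nat) ->
  SC d (fun z => fold_right Rmult 1 (map (fun i => z i ^ a i) l)).
Proof. induction l; simpl; intros. apply SC_const.
  apply (SC_mult d (fun z => z a0 ^ a a0)). apply SC_pow; auto. apply IHl; auto. Qed.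

Definition Good (d : nat) (f : Fn) : Prop := (forall z, bnd d (f z)) /\
  exists Gr : (nat -> R) -> nat -> CL, forall y v, HasD f y v (clsumn d (fun i => clscal (v i) (Gr y i))).

Lemma Good_ext d f g : (forall z, f z = g z) -> Good d g -> Good d f.
Proof. intros E H. replace f with g; auto. apply functional_extensionality; intros; auto. Qed.
Lemma Good_add d f g : Good d f -> Good d g -> Good d (fun z => cladd (f z) (g z)).
Proof. intros [Bf [F HF]] [Bg [G HG]]. split.
  - intros z k Hk. unfold cladd. rewrite Bf, Bg by auto. unfold cadd, c0; apply Cc_eq; simpl; ring.
  - exists (fun y i => cladd (F y i) (G y i)). intros. eapply HasD_eqv. apply HD_add; eauto.
    rewrite <- clsumn_add. apply clsumn_ext; intros. clring. Qed.
Lemma Good_scal d r f : Good d f -> Good d (fun z => clscal r (f z)).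
Proof. intros [Bf [F HF]]. split.
  - intros z k Hk. unfold clscal. rewrite Bf by auto. unfold cscal, c0; apply Cc_eq; simpl; ring.
  - exists (fun y i => clscal r (F y i)). intros. eapply HasD_eqv. apply HD_scal; eauto.
    rewrite <- clsumn_scal. apply clsumn_ext; intros. clring. Qed.
Lemma Good_zero d : Good d (fun _ => clzero).
Proof. split. intros z k _; reflexivity. exists (fun _ _ => clzero). intros. eapply HasD_eqv. apply HD_const.
  rewrite (clsumn_ext _ _ (fun _ => clzero)). symmetry; apply clsumn_zero. intros; clring. Qed.
Lemma Good_Ei d i f : Good d f -> Good d (fun z => Ei d i (f z)).
Proof. intros [Bf [F HF]]. split.
  - intros; apply Ei_bnd.
  - exists (fun y m => Ei d i (F y m)). intros. eapply HasD_eqv. apply HD_Ei; eauto.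
    rewrite Ei_sumn. apply clsumn_ext; intros. rewrite Ei_scal. auto. Qed.
Lemma Good_coord d j f : (j < d)%nat -> Good d f -> Good d (fun z => clscal (z j) (f z)).
Proof. intros Hj [Bf [F HF]]. split.
  - intros z k Hk. unfold clscal. rewrite Bf by auto. unfold cscal, c0; apply Cc_eq; simpl; ring.
  - exists (fun y i => cladd (clscal (unitv j i) (f y)) (clscal (y j) (F y i))). intros. eapply HasD_eqv.
    apply HD_coord; eauto.
    transitivity (cladd (clsumn d (fun i => clscal (unitv j i) (clscal (v i) (f y))))
                        (clscal (y j) (clsumn d (fun i => clscal (v i) (F y i))))).
    rewrite clsumn_delta; auto. rewrite <- clsumn_scal, <- clsumn_add. apply clsumn_ext; intros. clring. Qed.
Lemma Good_sumn d n (F : nat -> Fn) : (forall m, (m < n)%nat -> Good d (F m)) -> Good d (fun z => clsumn n (fun m => F m z)).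
Proof. induction n; intros H.
  - apply (Good_ext _ _ (fun _ => clzero)). intros; reflexivity. apply Good_zero.
  - apply (Good_ext _ _ (fun z => cladd (clsumn n (fun m => F m z)) (F n z))). intros; reflexivity.
    apply Good_add. apply IHn; intros; apply H; lia. apply H; lia. Qed.
Lemma Good_X d f : Good d f -> Good d (fun z => X d z (f z)).
Proof. intros. unfold X. apply (Good_sumn d d (fun m z => clscal (z m) (Ei d m (f z)))). intros.
  apply Good_coord; auto. apply Good_Ei; auto. Qed.
Lemma Good_scalf d g c : SC d g -> bnd d c -> Good d (fun z => clscal (g z) c).
Proof. intros [G HG] Bc. split.
  - intros z k Hk. unfold clscal. rewrite Bc by auto. unfold cscal, c0; apply Cc_eq; simpl; ring.
  - exists (fun y i => clscal (G y i) c). intros y v.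
    apply (HasD_eqv _ _ _ (clscal (rsum d (fun i => v i * G y i)) c)).
    2:{ rewrite <- clsumn_scal_sum. apply clsumn_ext; intros; clring. }
    intros k. unfold clscal, cscal; simpl. split.
    + eapply (dpl_mult (fun t => g (line y v t)) (fun _ => fst (c k))). apply HG. apply dpl_const. ring.
    + eapply (dpl_mult (fun t => g (line y v t)) (fun _ => snd (c k))). apply HG. apply dpl_const. ring.
Qed.

Lemma DD_has d f y v : Good d f -> HasD f y v (dirderiv v f y).
Proof. intros [B [F HF]]. rewrite (HasD_dirderiv _ _ _ _ (HF y v)). auto. Qed.
Lemma DD_lin d f y v : Good d f -> dirderiv v f y = clsumn d (fun i => clscal (v i) (dirderiv (unitv i) f y)).
Proof. intros [B [F HF]]. rewrite (HasD_dirderiv _ _ _ _ (HF y v)). apply clsumn_ext; intros.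
  rewrite (HasD_dirderiv _ _ _ _ (HF y (unitv i))). rewrite clsumn_delta; auto. Qed.
Lemma DD_bnd d f y v : Good d f -> bnd d (dirderiv v f y).
Proof. intros HG k Hk. pose proof (DD_has d f y v HG k) as [H1 H2]. destruct HG as [B _].
  assert (forall t, f (line y v t) k = c0) as Z by (intros; apply B; auto).
  apply Cc_eq; simpl.
  - apply (uniqueness_limite (fun t => fst (f (line y v t) k)) 0); auto.
    apply (dpl_ext _ (fun _ => 0)). intros; rewrite Z; reflexivity. apply dpl_const.
  - apply (uniqueness_limite (fun t => snd (f (line y v t) k)) 0); auto.
    apply (dpl_ext _ (fun _ => 0)). intros; rewrite Z; reflexivity. apply dpl_const.
Qed.

Definition Hom (N : nat) (f : Fn) : Prop := forall c z, f (fun j => c * z j) = clscal (c ^ N) (f z).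

Lemma dpl_pow1 N : derivable_pt_lim (fun t => (1 + t) ^ N) 0 (INR N).
Proof. pose proof (derivable_pt_lim_comp (fun t => 1 + t) (fun x => x ^ N) 0 1 (INR N * (1 + 0) ^ Nat.pred N)).
  apply (dpl_ext _ (comp (fun x => x ^ N) (fun t => 1 + t))). intros; reflexivity.
  eapply dpl_eqv. apply H. apply (dpl_ext _ (fun t => 1 + t * 1)). intros; ring. apply (dpl_lin 1 1). apply derivable_pt_lim_pow.
  rewrite Rplus_0_r, pow1. ring. Qed.

Lemma Euler d N f y : Good d f -> Hom N f ->
  clsumn d (fun i => clscal (y i) (dirderiv (unitv i) f y)) = clscal (INR N) (f y).
Proof. intros HG HH. rewrite <- DD_lin by auto. apply HasD_dirderiv. intros k.
  assert (forall t, f (line y y t) = clscal ((1 + t) ^ N) (f y)) as E.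
  { intros. rewrite <- HH. f_equal. apply functional_extensionality; intros; unfold line; ring. }
  unfold clscal, cscal; simpl. split.
  - apply (dpl_ext _ (fun t => (1 + t) ^ N * fst (f y k))). intros; rewrite E; reflexivity.
    eapply (dpl_mult (fun t => (1 + t) ^ N) (fun _ => fst (f y k))). apply dpl_pow1. apply dpl_const. ring.
  - apply (dpl_ext _ (fun t => (1 + t) ^ N * snd (f y k))). intros; rewrite E; reflexivity.
    eapply (dpl_mult (fun t => (1 + t) ^ N) (fun _ => snd (f y k))). apply dpl_pow1. apply dpl_const. ring.
Qed.


Lemma Dh_Ei d Rp kappa f y : Dh d Rp kappa f y = clsumn d (fun i => Ei d i (dunklT d Rp kappa i f y)).
Proof. unfold Dh. apply clsumn_ext; intros. apply clmul_egen; auto. Qed.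
Lemma T_fs d Rp kappa i f y : dunklT d Rp kappa i f y =
  cladd (dirderiv (unitv i) f y) (fs Rp (fun a => clscal (kappa a * a i) (divdiff d a f y))).
Proof. reflexivity. Qed.

Lemma refl_on d a y : ip d a y = 0 -> refl d a y = y.
Proof. intros H. apply functional_extensionality; intro j. unfold refl. rewrite H. unfold Rdiv. ring. Qed.

Lemma dirderiv_add d f g y v : Good d f -> Good d g ->
  dirderiv v (fun z => cladd (f z) (g z)) y = cladd (dirderiv v f y) (dirderiv v g y).
Proof. intros. apply HasD_dirderiv. apply HD_add; apply (DD_has d); auto. Qed.
Lemma dirderiv_scal d r f y v : Good d f -> dirderiv v (fun z => clscal r (f z)) y = clscal r (dirderiv v f y).
Proof. intros. apply HasD_dirderiv. apply HD_scal; apply (DD_has d); auto. Qed.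

Lemma divdiff_add d a f g y : Good d f -> Good d g ->
  divdiff d a (fun z => cladd (f z) (g z)) y = cladd (divdiff d a f y) (divdiff d a g y).
Proof. intros. unfold divdiff. destruct (Req_EM_T _ _).
  - rewrite (dirderiv_add d) by auto. clring.
  - clring. Qed.
Lemma divdiff_scal d r a f y : Good d f -> divdiff d a (fun z => clscal r (f z)) y = clscal r (divdiff d a f y).
Proof. intros. unfold divdiff. destruct (Req_EM_T _ _).
  - rewrite (dirderiv_scal d) by auto. clring.
  - clring. Qed.

Lemma Dh_add d Rp kappa f g y : Good d f -> Good d g ->
  Dh d Rp kappa (fun z => cladd (f z) (g z)) y = cladd (Dh d Rp kappa f y) (Dh d Rp kappa g y).
Proof. intros. rewrite !Dh_Ei, <- clsumn_add. apply clsumn_ext; intros. rewrite <- Ei_add. f_equal.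
  rewrite !T_fs. rewrite (dirderiv_add d) by auto.
  rewrite (fs_ext _ _ (fun a => cladd (clscal (kappa a * a i) (divdiff d a f y)) (clscal (kappa a * a i) (divdiff d a g y)))).
  rewrite fs_add. clring. intros. rewrite (divdiff_add d) by auto. clring. Qed.
Lemma Dh_scal d Rp kappa r f y : Good d f ->
  Dh d Rp kappa (fun z => clscal r (f z)) y = clscal r (Dh d Rp kappa f y).
Proof. intros. rewrite !Dh_Ei, <- clsumn_scal. apply clsumn_ext; intros. rewrite <- Ei_scal. f_equal.
  rewrite !T_fs. rewrite (dirderiv_scal d) by auto.
  rewrite (fs_ext _ _ (fun a => clscal r (clscal (kappa a * a i) (divdiff d a f y)))).
  rewrite fs_scal. clring. intros. rewrite (divdiff_scal d) by auto. clring. Qed.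

Lemma divdiff_bnd d a f y : Good d f -> bnd d (divdiff d a f y).
Proof. intros HG k Hk. unfold divdiff. destruct (Req_EM_T _ _).
  - unfold clscal. rewrite (DD_bnd d) by auto. unfold cscal, c0; apply Cc_eq; simpl; ring.
  - destruct HG as [B _]. unfold clscal, clsub, cladd, clscal. rewrite !B by auto. unfold cscal, cadd, c0; apply Cc_eq; simpl; ring.
Qed.
Lemma fs_bnd {A} d (l : list A) F : (forall a, bnd d (F a)) -> bnd d (fs l F).
Proof. induction l; simpl; intros H k Hk. reflexivity. unfold fs in *; simpl. unfold cladd. rewrite IHl, H by auto.
  unfold cadd, c0; apply Cc_eq; simpl; ring. Qed.
Lemma T_bnd d Rp kappa i f y : Good d f -> bnd d (dunklT d Rp kappa i f y).
Proof. intros HG k Hk. rewrite T_fs. unfold cladd. rewrite (DD_bnd d) by auto.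
  rewrite (fs_bnd d). unfold cadd, c0; apply Cc_eq; simpl; ring.
  intros a k' Hk'. unfold clscal. rewrite (divdiff_bnd d) by auto.
  unfold cscal, c0; apply Cc_eq; simpl; ring. auto. Qed.


Lemma rsum_scal n c f : rsum n (fun i => c * f i) = c * rsum n f.
Proof. induction n; simpl. ring. rewrite IHn; ring. Qed.

Lemma keyA d Rp kappa N f y :
  (forall a, In a Rp -> ip d a a <> 0) -> Good d f -> Hom N f ->
  Dh d Rp kappa (fun z => X d z (f z)) y =
  cladd (clscal (-1) (X d y (Dh d Rp kappa f y))) (clscal (-(2 * INR N + mu d Rp kappa)) (f y)).
Proof. intros Hq HG HH.
  set (g := fun z => X d z (f z)).
  assert (S1 : forall v, dirderiv v g y = cladd (X d v (f y)) (X d y (dirderiv v f y))).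
  { intros; apply HasD_dirderiv; apply HD_X; apply (DD_has d); auto. }
  assert (S2 : forall a, In a Rp -> divdiff d a g y =
     cladd (X d y (divdiff d a f y)) (clscal (2 / ip d a a) (X d a (f (refl d a y))))).
  { intros a Ha. unfold divdiff. destruct (Req_EM_T (ip d a y) 0) as [E|E].
    - rewrite S1, (refl_on d a y E), X_scal. clring.
    - assert (Rf : refl d a y = fun j => 1 * y j + (- (2 * ip d a y / ip d a a)) * a j).
      { apply functional_extensionality; intro j; unfold refl; ring. }
      unfold g. rewrite Rf, X_lin. unfold clsub. rewrite ?X_add, ?X_scal.
      replace (2 / ip d a a) with (/ ip d a y * (2 * ip d a y / ip d a a)) by (field; auto).
      rewrite X_add, X_scal. clring. }
  assert (S3 : forall i, (i < d)%nat -> dunklT d Rp kappa i g y =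
     cladd (cladd (Ei d i (f y)) (X d y (dunklT d Rp kappa i f y)))
           (fs Rp (fun a => clscal (kappa a * a i * (2 / ip d a a)) (X d a (f (refl d a y)))))).
  { intros i Hi. rewrite !T_fs. rewrite S1, X_unitv by auto.
    rewrite (fs_ext _ _ (fun a => cladd (X d y (clscal (kappa a * a i) (divdiff d a f y)))
        (clscal (kappa a * a i * (2 / ip d a a)) (X d a (f (refl d a y)))))).
    rewrite fs_add, <- X_fs, X_add. clring.
    intros a Ha. rewrite S2 by auto. rewrite X_scal. clring. }
  rewrite Dh_Ei.
  rewrite (clsumn_ext _ _ (fun i => cladd (cladd (Ei d i (Ei d i (f y))) (Ei d i (X d y (dunklT d Rp kappa i f y))))
      (Ei d i (fs Rp (fun a => clscal (kappa a * a i * (2 / ip d a a)) (X d a (f (refl d a y)))))))).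
  2:{ intros. rewrite S3, !Ei_add; auto. }
  rewrite !clsumn_add.
  destruct HG as [B HG'].
  rewrite (clsumn_ext d (fun i => Ei d i (Ei d i (f y))) (fun _ => clscal (-1) (f y))) by (intros; apply Ei_Ei; auto).
  rewrite clsumn_const.
  rewrite (AC d y (fun i => dunklT d Rp kappa i f y)) by (intros; apply T_bnd; split; auto).
  rewrite <- Dh_Ei.
  rewrite (clsumn_ext d (fun i => Ei d i (fs Rp (fun a => clscal (kappa a * a i * (2 / ip d a a)) (X d a (f (refl d a y))))))
     (fun i => fs Rp (fun a => clscal (kappa a * a i * (2 / ip d a a)) (Ei d i (X d a (f (refl d a y))))))).
  2:{ intros. rewrite Ei_fs. apply fs_ext; intros. apply Ei_scal. }
  rewrite clsumn_fs.
  rewrite (fs_ext Rp (fun a => clsumn d (fun i => clscal (kappa a * a i * (2 / ip d a a)) (Ei d i (X d a (f (refl d a y))))))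
     (fun a => clscal (-2) (clscal (kappa a) (f (refl d a y))))).
  2:{ intros a Ha. transitivity (clscal (kappa a * (2 / ip d a a)) (X d a (X d a (f (refl d a y))))).
      unfold X at 2. rewrite <- clsumn_scal. apply clsumn_ext; intros. clring.
      rewrite X_X by auto.
      assert (Hc : kappa a * (2 / ip d a a) * (- ip d a a) = -2 * kappa a) by (field; auto).
      transitivity (clscal (kappa a * (2 / ip d a a) * (- ip d a a)) (f (refl d a y))). clring.
      rewrite Hc. clring. }
  assert (P4 : clsumn d (fun i => clscal (y i) (dunklT d Rp kappa i f y)) =
     cladd (clscal (INR N) (f y)) (cladd (clscal (gamma Rp kappa) (f y))
       (clscal (-1) (fs Rp (fun a => clscal (kappa a) (f (refl d a y))))))).
  { rewrite (clsumn_ext d _ (fun i => cladd (clscal (y i) (dirderiv (unitv i) f y))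
        (fs Rp (fun a => clscal (y i * (kappa a * a i)) (divdiff d a f y))))).
    2:{ intros i Hi. rewrite T_fs.
        transitivity (cladd (clscal (y i) (dirderiv (unitv i) f y))
           (clscal (y i) (fs Rp (fun a => clscal (kappa a * a i) (divdiff d a f y))))). clring.
        f_equal. rewrite <- fs_scal. apply fs_ext; intros; clring. }
    rewrite clsumn_add, (Euler d N f y) by (auto; split; auto).
    rewrite clsumn_fs.
    rewrite (fs_ext Rp _ (fun a => cladd (clscal (kappa a) (f y)) (clscal (-1) (clscal (kappa a) (f (refl d a y)))))).
    2:{ intros a Ha.
        transitivity (clscal (kappa a * ip d a y) (divdiff d a f y)).
        { rewrite clsumn_scal_sum. f_equal. unfold ip. rewrite <- rsum_scal. apply rsum_ext; intros; ring. }
        unfold divdiff. destruct (Req_EM_T (ip d a y) 0) as [E|E].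
        - rewrite E, refl_on by auto. clring.
        - transitivity (clscal (kappa a * ip d a y * / ip d a y) (clsub (f y) (f (refl d a y)))). clring.
          replace (kappa a * ip d a y * / ip d a y) with (kappa a) by (field; auto). clring. }
    rewrite fs_add, fs_scalf, fs_scal. unfold gamma. reflexivity. }
  rewrite P4, fs_scal. unfold mu. clring.
Qed.


Fixpoint bb (lam : R) (m : nat) : R := match m with O => 0 | S m' => - bb lam m' - (2 * INR m' + lam) end.
Definition SA (lam : R) (c : nat -> R) (m : nat) : R := bb lam (S m) * c (S m).
Definition SX (c : nat -> R) (m : nat) : R := match m with O => 0 | S m' => c m' end.
Definition SN (c : nat -> R) (m : nat) : R := INR m * c m.
Fixpoint hs (lam : R) (s : nat) : nat -> R := match s with
  | O => fun m => if (m =? 0)%nat then 1 else 0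
  | S s' => fun m => SA lam (hs lam s') m - 2 * SX (hs lam s') m end.
Definition Cs (lam : R) (s : nat) : R := if Nat.even s then 2 * INR s else 2 * (INR s + lam - 1).

Lemma Cs_rel lam t : Cs lam (S t) + Cs lam t = 4 * INR t + 2 * lam.
Proof. unfold Cs. rewrite Nat.even_succ, <- Nat.negb_even. rewrite S_INR. destruct (Nat.even t); cbn [negb]; ring. Qed.

Lemma bb_S lam m : bb lam (S m) = - bb lam m - (2 * INR m + lam).
Proof. reflexivity. Qed.
Lemma bb_0 lam : bb lam 0 = 0.
Proof. reflexivity. Qed.
Lemma AX lam c m : SA lam (SX c) m = - SX (SA lam c) m - 2 * SN c m - lam * c m.
Proof. unfold SA, SX, SN. destruct m.
  - rewrite bb_S, bb_0. replace (INR 0) with 0 by reflexivity. ring.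
  - rewrite (bb_S lam (S m)). ring. Qed.
Lemma A_sub lam f g m : SA lam (fun m => f m - 2 * g m) m = SA lam f m - 2 * SA lam g m.
Proof. unfold SA; ring. Qed.
Lemma N_sub f g m : SN (fun m => f m - 2 * g m) m = SN f m - 2 * SN g m.
Proof. unfold SN; ring. Qed.
Lemma A_scal lam c f m : SA lam (fun m => c * f m) m = c * SA lam f m.
Proof. unfold SA; ring. Qed.
Lemma X_scal' c f m : SX (fun m => c * f m) m = c * SX f m.
Proof. unfold SX; destruct m; ring. Qed.
Lemma NA lam c m : SN (SA lam c) m = SA lam (SN c) m - SA lam c m.
Proof. unfold SA, SN. rewrite S_INR. ring. Qed.
Lemma NX c m : SN (SX c) m = SX (SN c) m + SX c m.
Proof. unfold SX, SN. destruct m. ring. rewrite S_INR. ring. Qed.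
Lemma A_ext lam f g m : (forall m, f m = g m) -> SA lam f m = SA lam g m.
Proof. intros; unfold SA; rewrite H; auto. Qed.
Lemma X_ext f g m : (forall m, f m = g m) -> SX f m = SX g m.
Proof. intros; unfold SX; destruct m; auto. Qed.
Lemma A_lin lam a b f g m : SA lam (fun m => a * f m + b * g m) m = a * SA lam f m + b * SA lam g m.
Proof. unfold SA; ring. Qed.
Lemma X_lin' a b f g m : SX (fun m => a * f m + b * g m) m = a * SX f m + b * SX g m.
Proof. unfold SX; destruct m; ring. Qed.

Definition Rs lam s := forall m, 2 * SN (hs lam s) m = 2 * INR s * hs lam s m - SA lam (SA lam (hs lam s)) m.
Definition Qs lam s := forall m, SA lam (hs lam (S s)) m = Cs lam (S s) * hs lam s m.
Definition Ks lam s := forall m, (Cs lam (S s) - 4) * SA lam (hs lam s) m - SA lam (SA lam (SA lam (hs lam s))) m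
   + 2 * SX (SA lam (SA lam (hs lam s))) m = 0.

Lemma Gid lam s : Rs lam s -> forall m, SA lam (hs lam (S s)) m =
  - SA lam (SA lam (hs lam s)) m + 2 * SX (SA lam (hs lam s)) m + (4 * INR s + 2 * lam) * hs lam s m.
Proof. intros R m. simpl hs. rewrite A_sub, AX. pose proof (R m). lra. Qed.

Lemma J0 lam : Rs lam 0 /\ Qs lam 0 /\ Ks lam 0.
Proof.
  assert (Z : forall m, SA lam (hs lam 0) m = 0). { intros; unfold SA; simpl. ring. }
  assert (ZZ : forall m, SA lam (SA lam (hs lam 0)) m = 0). { intros; unfold SA at 1. rewrite Z. ring. }
  split; [|split].
  - intros m. rewrite ZZ. unfold SN; simpl. destruct m; simpl; ring.
  - intros m. simpl hs. unfold SA at 1. rewrite Z. unfold SX. unfold Cs; simpl.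
    destruct m; simpl; ring.
  - intros m. rewrite Z. unfold SA at 1. rewrite ZZ. unfold SX. destruct m; try rewrite ZZ; ring.
Qed.

Lemma Jstep lam s : Rs lam s -> Qs lam s -> Ks lam s -> Rs lam (S s) /\ Qs lam (S s) /\ Ks lam (S s).
Proof. intros R Q K.
  set (h' := hs lam s).
  assert (Hh : forall m, hs lam (S s) m = SA lam h' m - 2 * SX h' m) by reflexivity.
  assert (NE : forall m, SN h' m = INR s * h' m - / 2 * SA lam (SA lam h') m) by (intros m; pose proof (R m); unfold h'; lra).
  assert (QF : forall m, SA lam (hs lam (S s)) m = Cs lam (S s) * h' m) by apply Q.
  assert (RS : Rs lam (S s)).
  { intros m. rewrite S_INR.
    rewrite (A_ext lam _ (fun m => Cs lam (S s) * h' m)) by apply QF. rewrite A_scal.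
    replace (SN (hs lam (S s)) m) with (SN (fun m => SA lam h' m - 2 * SX h' m) m) by reflexivity.
    rewrite N_sub, NA, NX.
    rewrite (A_ext lam _ (fun m => INR s * h' m + (- / 2) * SA lam (SA lam h') m)) by (intros; rewrite NE; ring).
    rewrite (X_ext _ (fun m => INR s * h' m + (- / 2) * SA lam (SA lam h') m)) by (intros; rewrite NE; ring).
    rewrite A_lin, X_lin'. rewrite Hh. pose proof (K m) as Km. fold h' in Km.
    transitivity ((2 * (INR s + 1) * (SA lam h' m - 2 * SX h' m) - Cs lam (S s) * SA lam h' m) +
       ((Cs lam (S s) - 4) * SA lam h' m - SA lam (SA lam (SA lam h')) m + 2 * SX (SA lam (SA lam h')) m)).
    field. rewrite Km. ring. }
  assert (QS : Qs lam (S s)).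
  { intros m. simpl hs at 1. fold h'. rewrite A_sub, AX.
    pose proof (RS m) as Rm.
    rewrite (A_ext lam (SA lam (hs lam (S s))) (fun m => Cs lam (S s) * h' m)) in Rm by apply QF. rewrite A_scal in Rm.
    rewrite (A_ext lam (SA lam (hs lam (S s))) (fun m => Cs lam (S s) * h' m)) by apply QF. rewrite A_scal.
    rewrite (X_ext (SA lam (hs lam (S s))) (fun m => Cs lam (S s) * h' m)) by apply QF. rewrite X_scal'.
    rewrite Hh in *. pose proof (Cs_rel lam (S s)) as CR. rewrite S_INR in *.
    assert (Cs lam (S (S s)) = 4 * (INR s + 1) + 2 * lam - Cs lam (S s)) as C2 by lra. rewrite C2.
    change (SN (fun m0 => SA lam h' m0 - 2 * SX h' m0) m) with (SN (hs lam (S s)) m). replace (SN (hs lam (S s)) m) with (/2 * (2 * SN (hs lam (S s)) m)) by field. rewrite Rm. field. }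
  split; [auto | split; [auto|]].
  intros m.
  assert (E1 : forall m, SA lam (SA lam (hs lam (S s))) m = Cs lam (S s) * SA lam h' m).
  { intros. rewrite (A_ext lam _ (fun m => Cs lam (S s) * h' m)) by apply QF. apply A_scal. }
  rewrite QF. rewrite (A_ext lam _ (fun m => Cs lam (S s) * SA lam h' m)) by apply E1.
  rewrite (X_ext _ (fun m => Cs lam (S s) * SA lam h' m)) by apply E1.
  rewrite A_scal, X_scal'.
  pose proof (Gid lam s R m) as G. rewrite QF in G. fold h' in G.
  pose proof (Cs_rel lam (S s)) as CR. rewrite S_INR in CR.
  assert (Cs lam (S (S s)) = 4 * (INR s + 1) + 2 * lam - Cs lam (S s)) as C2 by lra. rewrite C2.
  transitivity (Cs lam (S s) * ((4 * (INR s + 1) + 2 * lam - Cs lam (S s) - 4) * h' m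
      - SA lam (SA lam h') m + 2 * SX (SA lam h') m)). ring.
  replace (SA lam (SA lam h') m) with (2 * SX (SA lam h') m + (4 * INR s + 2*lam) * h' m - Cs lam (S s) * h' m) by lra.
  ring.
Qed.

Lemma Jall lam s : Rs lam s /\ Qs lam s /\ Ks lam s.
Proof. induction s. apply J0. destruct IHs as [A [B C]]. apply Jstep; auto. Qed.

Lemma final_coef lam s m : SA lam (SA lam (hs lam s)) m - 2 * SX (SA lam (hs lam s)) m - Cs lam s * hs lam s m = 0.
Proof. destruct s.
  - assert (Z : forall m, SA lam (hs lam 0) m = 0). { intros; unfold SA; simpl. ring. }
    unfold SA at 1. rewrite Z. unfold SX. destruct m; try rewrite Z; unfold Cs; simpl; ring.
  - destruct (Jall lam s) as [_ [Q _]].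
    rewrite (A_ext lam (SA lam (hs lam (S s))) (fun m => Cs lam (S s) * hs lam s m)) by apply Q.
    rewrite (X_ext (SA lam (hs lam (S s))) (fun m => Cs lam (S s) * hs lam s m)) by apply Q.
    rewrite A_scal, X_scal'. simpl hs. ring.
Qed.

Lemma hs_supp lam s m : (s < m)%nat -> hs lam s m = 0.
Proof. revert m. induction s; intros m H; simpl.
  - destruct (Nat.eqb_spec m 0); try lia. auto.
  - unfold SA, SX. rewrite IHs by lia. destruct m. lia. rewrite IHs by lia. ring.
Qed.


Definition mono (d : nat) (a : nat -> nat) (x : nat -> R) : R := fold_right Rmult 1 (map (fun i => x i ^ a i) (seq 0 d)).
Definition polyF (d : nat) (L : list ((nat -> nat) * CL)) : Fn := fun x =>
  fold_right (fun mc acc => cladd (clscal (fold_right Rmult 1 (map (fun i => x i ^ fst mc i) (seq 0 d))) (snd mc)) acc) clzero L.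

Lemma Good_poly d L : (forall mc, In mc L -> bnd d (snd mc)) -> Good d (polyF d L).
Proof. induction L; intros H.
  - apply (Good_ext _ _ (fun _ => clzero)). intros; reflexivity. apply Good_zero.
  - apply (Good_ext _ _ (fun x => cladd (clscal (fold_right Rmult 1 (map (fun i => x i ^ fst a i) (seq 0 d))) (snd a)) (polyF d L x))).
    intros; reflexivity.
    apply Good_add. apply Good_scalf. apply SC_prod. intros i Hi. apply in_seq in Hi. lia.
    apply H; simpl; auto. apply IHL; intros; apply H; simpl; auto.
Qed.

Lemma fold_nat_shift (a : nat -> nat) l z : fold_right (fun i acc => (a i + acc)%nat) z l = (fold_right (fun i acc => (a i + acc)%nat) 0%nat l + z)%nat.
Proof. induction l; simpl; auto. rewrite IHl. lia. Qed.
Lemma fold_seq_nsum d a : fold_right (fun i acc => (a i + acc)%nat) 0%nat (seq 0 d) = nsum d a.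
Proof. induction d; [reflexivity|]. rewrite seq_S, fold_right_app. cbn [fold_right]. rewrite fold_nat_shift, IHd. simpl nsum. rewrite Nat.add_0_l, Nat.add_0_r. reflexivity. Qed.
Lemma mono_hom l c (x : nat -> R) a : fold_right Rmult 1 (map (fun i => (c * x i) ^ a i) l) =
  c ^ (fold_right (fun i acc => (a i + acc)%nat) 0%nat l) * fold_right Rmult 1 (map (fun i => x i ^ a i) l).
Proof. induction l; simpl. ring. rewrite IHl, Rpow_mult_distr, pow_add. ring. Qed.

Lemma Hom_poly d n L : (forall mc, In mc L -> nsum d (fst mc) = n) -> Hom n (polyF d L).
Proof. intros H c z. unfold polyF. induction L; simpl. clring.
  rewrite IHL by (intros; apply H; simpl; auto). rewrite mono_hom, fold_seq_nsum, H by (simpl; auto). clring. Qed.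

Fixpoint Vf (d : nat) (P : Fn) (m : nat) : Fn := match m with
  | O => P | S m' => fun y => X d y (Vf d P m' y) end.

Lemma Good_Vf d P m : Good d P -> Good d (Vf d P m).
Proof. intros. induction m; simpl; auto. apply Good_X; auto. Qed.
Lemma X_scaly d c z u : X d (fun j => c * z j) u = clscal c (X d z u).
Proof. unfold X. rewrite <- clsumn_scal. apply clsumn_ext; intros. clring. Qed.
Lemma Hom_Vf d P n m : Hom n P -> Hom (m + n) (Vf d P m).
Proof. intros H. induction m; simpl; auto. intros c z. rewrite IHm, X_scal, X_scaly. clring. Qed.

Lemma DV d Rp kappa P n : (forall a, In a Rp -> ip d a a <> 0) -> Good d P -> Hom n P ->
  (forall x, Dh d Rp kappa P x = clzero) ->
  forall m y, Dh d Rp kappa (Vf d P m) y = clscal (bb (mu d Rp kappa + 2 * INR n) m) (Vf d P (pred m) y).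
Proof. intros Hq HG HH HD. induction m; intros y.
  - simpl. rewrite HD. clring.
  - change (Vf d P (S m)) with (fun y => X d y (Vf d P m y)).
    rewrite (keyA d Rp kappa (m + n)) by first [apply Good_Vf; auto | apply Hom_Vf; auto | auto].
    rewrite IHm, X_scal.
    destruct m.
    + rewrite bb_S, bb_0. simpl pred. simpl Vf. replace (INR 0) with 0 by reflexivity. rewrite plus_INR.
      replace (INR 0) with 0 by reflexivity. clring.
    + change (X d y (Vf d P (pred (S m)) y)) with (Vf d P (S m) y).
      rewrite (bb_S _ (S m)), plus_INR. simpl pred. clring.
Qed.


Definition comb (d : nat) (P : Fn) (M : nat) (c : nat -> R) : Fn := fun y => clsumn M (fun m => clscal (c m) (Vf d P m y)).

Lemma Good_comb d P M c : Good d P -> Good d (comb d P M c).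
Proof. intros. unfold comb. apply (Good_sumn d M (fun m y => clscal (c m) (Vf d P m y))). intros.
  apply Good_scal. apply Good_Vf; auto. Qed.

Lemma Dh_zero d Rp kappa y : Dh d Rp kappa (fun _ => clzero) y = clzero.
Proof. replace (fun _ : nat -> R => clzero) with (fun z : nat -> R => clscal 0 ((fun _ : nat -> R => clzero) z)).
  rewrite Dh_scal. clring. apply Good_zero. apply functional_extensionality; intros; clring. Qed.

Lemma Dh_sumn d Rp kappa M (F : nat -> Fn) y : (forall m, (m < M)%nat -> Good d (F m)) ->
  Dh d Rp kappa (fun z => clsumn M (fun m => F m z)) y = clsumn M (fun m => Dh d Rp kappa (F m) y).
Proof. induction M; intros H.
  - apply Dh_zero.
  - change (fun z => clsumn (S M) (fun m => F m z)) with (fun z => cladd (clsumn M (fun m => F m z)) (F M z)).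
    rewrite Dh_add. rewrite IHM. reflexivity. intros; apply H; lia.
    apply (Good_sumn d M F). intros; apply H; lia. apply H; lia.
Qed.

Lemma Dh_comb d Rp kappa P n M c y : (forall a, In a Rp -> ip d a a <> 0) -> Good d P -> Hom n P ->
  (forall x, Dh d Rp kappa P x = clzero) -> c M = 0 ->
  Dh d Rp kappa (comb d P M c) y = comb d P M (SA (mu d Rp kappa + 2 * INR n) c) y.
Proof. intros Hq HG HH HD HM. unfold comb.
  rewrite (Dh_sumn d Rp kappa M (fun m z => clscal (c m) (Vf d P m z))).
  2:{ intros. apply Good_scal, Good_Vf; auto. }
  rewrite (clsumn_ext M _ (fun m => clscal (c m) (clscal (bb (mu d Rp kappa + 2 * INR n) m) (Vf d P (pred m) y)))).
  2:{ intros. rewrite Dh_scal by (apply Good_Vf; auto). rewrite (DV d Rp kappa P n); auto. }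
  destruct M. reflexivity.
  rewrite clsumn_shift, clsumn_S. rewrite bb_0. unfold SA at 2. rewrite HM.
  rewrite (clsumn_ext M _ (fun m => clscal (SA (mu d Rp kappa + 2 * INR n) c m) (Vf d P m y))).
  clring. intros. unfold SA. simpl pred. clring.
Qed.

Lemma X_comb d P M c y : c (pred M) = 0 -> X d y (comb d P M c y) = comb d P M (SX c) y.
Proof. intros HM. unfold comb. rewrite X_sumn.
  rewrite (clsumn_ext M _ (fun m => clscal (c m) (Vf d P (S m) y))).
  2:{ intros. rewrite X_scal. reflexivity. }
  destruct M. reflexivity. simpl pred in HM.
  rewrite clsumn_S, HM, clsumn_shift. unfold SX at 1.
  rewrite (clsumn_ext M (fun i => clscal (SX c (S i)) (Vf d P (S i) y)) (fun m => clscal (c m) (Vf d P (S m) y))).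
  clring. intros. reflexivity.
Qed.

Lemma comb_lin d P M a b r y : cladd (comb d P M a y) (clscal r (comb d P M b y)) = comb d P M (fun m => a m + r * b m) y.
Proof. unfold comb. rewrite <- clsumn_scal, <- clsumn_add. apply clsumn_ext; intros. clring. Qed.
Lemma comb_zero d P M c y : (forall m, c m = 0) -> comb d P M c y = clzero.
Proof. intros. unfold comb. rewrite (clsumn_ext M _ (fun _ => clzero)). apply clsumn_zero. intros. rewrite H. clring. Qed.

Lemma ip_nz d Rl Rp a : is_root_system d Rl -> is_positive_subsystem d Rl Rp -> In a Rp -> ip d a a <> 0.
Proof. intros [_ [HR _]] [_ [beta [_ Hb]]] Ha. apply Hb in Ha. destruct Ha as [Ha _].
  destruct (HR a Ha) as [_ [i [Hi Hai]]].
  assert (forall m, 0 <= rsum m (fun j => a j * a j)) as Pos.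
  { induction m; simpl. lra. pose proof (Rle_0_sqr (a m)). unfold Rsqr in H. lra. }
  unfold ip. assert (0 < rsum d (fun j => a j * a j)); [|lra].
  clear HR Ha Hb. induction d. lia. simpl. destruct (Nat.eq_dec i d).
  - subst. pose proof (Pos d). assert (0 < a d * a d) by (apply Rsqr_pos_lt; auto). lra.
  - pose proof (IHd ltac:(lia)). pose proof (Rle_0_sqr (a d)). unfold Rsqr in H0. lra.
Qed.

Theorem theorem3p2 (d : nat) (hd : (2 <= d)%nat)
  (Rl Rp : list (nat -> R)) (hR : is_root_system d Rl)
  (hRp : is_positive_subsystem d Rl Rp)
  (kappa : (nat -> R) -> R) (hk : is_multiplicity d Rl kappa)
  (hg : 0 < gamma Rp kappa)
  (n s : nat) (P : Fn) (hP : in_Mn d Rp kappa n P) :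
  forall x : nat -> R,
    let H := Hfun d Rp kappa s P in
    clsub (clsub (Dh d Rp kappa (Dh d Rp kappa H) x)
                 (clscal 2 (clmul d (vecCL d x) (Dh d Rp kappa H x))))
          (clscal (Cconst s (mu d Rp kappa) n) (H x))
    = clzero.
Proof.
  intros x. cbv zeta.
  destruct hP as [[L [HL HPL]] HD].
  assert (Hq : forall a, In a Rp -> ip d a a <> 0) by (intros; eapply ip_nz; eauto).
  assert (EP : P = polyF d L) by (apply functional_extensionality; intros; rewrite HPL; reflexivity).
  assert (HG : Good d P) by (rewrite EP; apply Good_poly; intros mc Hm; exact (proj2 (HL mc Hm))).
  assert (HH : Hom n P) by (rewrite EP; apply Hom_poly; intros mc Hm; exact (proj1 (HL mc Hm))).
  set (lam := mu d Rp kappa + 2 * INR n).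
  set (M := (s + 3)%nat).
  assert (Hc : forall t, (t <= s)%nat -> Hfun d Rp kappa t P = comb d P M (hs lam t)).
  { induction t; intros Ht.
    - apply functional_extensionality; intro y. unfold comb. simpl Hfun.
      unfold M. rewrite Nat.add_comm. simpl plus. rewrite clsumn_shift.
      rewrite (clsumn_ext _ _ (fun _ => clzero)). rewrite clsumn_zero. simpl. clring.
      intros. simpl. clring.
    - change (Hfun d Rp kappa (S t) P) with (Dplus d Rp kappa (Hfun d Rp kappa t P)).
      rewrite IHt by lia. apply functional_extensionality; intro y. unfold Dplus.
      rewrite clmul_vec. rewrite (Dh_comb d Rp kappa P n) by (auto; apply hs_supp; unfold M; lia).
      rewrite X_comb by (apply hs_supp; unfold M; simpl; lia).
      fold lam. transitivity (cladd (comb d P M (SA lam (hs lam t)) y) (clscal (-2) (comb d P M (SX (hs lam t)) y))).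
      clring. rewrite comb_lin. unfold comb. apply clsumn_ext. intros. f_equal. simpl. ring. }
  rewrite Hc by lia.
  assert (D1 : Dh d Rp kappa (comb d P M (hs lam s)) = comb d P M (SA lam (hs lam s))).
  { apply functional_extensionality; intro y. apply (Dh_comb d Rp kappa P n); auto. apply hs_supp; unfold M; lia. }
  rewrite D1. rewrite (Dh_comb d Rp kappa P n) by (auto; unfold SA; rewrite hs_supp by (unfold M; lia); ring).
  rewrite clmul_vec, X_comb by (unfold SA; rewrite hs_supp by (unfold M; simpl; lia); ring).
  assert (CC : Cconst s (mu d Rp kappa) n = Cs lam s).
  { unfold Cconst, Cs, lam. destruct (Nat.even s); ring. }
  rewrite CC. fold lam.
  transitivity (cladd (cladd (comb d P M (SA lam (SA lam (hs lam s))) x) (clscal (-2) (comb d P M (SX (SA lam (hs lam s))) x)))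
      (clscal (- Cs lam s) (comb d P M (hs lam s) x))). clring.
  rewrite !comb_lin. apply comb_zero. intros m. pose proof (final_coef lam s m). lra.
Qed.
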